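(* Let $0 < \epsilon < 1/20$. Then for all sufficiently large $n$ (depending on $\epsilon$), writing $G = (\mathbb{Z}/2\mathbb{Z})^n$ and $N = 2^n$, there is a function $f : G \to [0,1]$ such that every subgroup $H \leq G$ which is $\epsilon$-regular for $f$ satisfies $|G/H| \geq W\!\left(\tfrac12\log_2(1/\epsilon) - 5\right)$.
   Context: For a subgroup $H \leq G$ and $g \in G$ define $f_H^{+g} : H \to [0,1]$ by $f_H^{+g}(x) = f(x+g)$. An element $g \in G$ is an $\epsilon$-regular value for $f$ (with respect to $H$) if $\left|\sum_{x \in H} f_H^{+g}(x)\chi(x)\right| \leq \epsilon|H|$ for every nontrivial character $\chi$ of $H$. $H$ is $\epsilon$-regular for $f$ if the number of $g \in G$ which are not $\epsilon$-regular values is at most $\epsilon N$. $W(t)$ is a tower of twos of height $\lceil t\rceil$: $W(t) = w_{\max(\lceil t\rceil,0)}$ where $w_0 = 1$, $w_{h+1} = 2^{w_h}$. *)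

(* Defs.v *)
From HB Require Import structures.
From mathcomp Require Import all_boot all_order all_algebra.
From mathcomp Require Import all_classical all_reals all_analysis.
From mathcomp.real_closed Require Import complex.
Set Implicit Arguments. Unset Strict Implicit. Unset Printing Implicit Defensive.
Import Order.TTheory GRing.Theory Num.Theory.
Local Open Scope ring_scope.

Definition Gn (n : nat) := 'rV['F_2]_n.

Definition is_subgroup (n : nat) (H : {set Gn n}) : Prop :=
  0 \in H /\ (forall x y, x \in H -> y \in H -> x + y \in H)
  /\ (forall x, x \in H -> - x \in H).

(* A character of H: a homomorphism H -> C^* (values taken in R[i]);
   only its values on H matter. *)
Definition is_character (R : rcfType) (n : nat) (H : {set Gn n})
  (chi : Gn n -> R[i]) : Prop :=
  (forall x, x \in H -> chi x != 0) /\
  (forall x y, x \in H -> y \in H -> chi (x + y) = chi x * chi y).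

Definition nontrivial_on (R : rcfType) (n : nat) (H : {set Gn n})
  (chi : Gn n -> R[i]) : Prop := exists2 x, x \in H & chi x != 1.

Definition regular_value (R : rcfType) (n : nat) (f : Gn n -> R)
  (H : {set Gn n}) (eps : R) (g : Gn n) : Prop :=
  forall chi : Gn n -> R[i], is_character H chi -> nontrivial_on H chi ->
    `| \sum_(x in H) ((f (x + g))%:C%C * chi x) | <= ((eps * #|H|%:R)%:C)%C.

Definition regular_subgroup (R : rcfType) (n : nat) (f : Gn n -> R)
  (H : {set Gn n}) (eps : R) : Prop :=
  #|[set g : Gn n | ~~ `[< regular_value f H eps g >]]|%:R <= eps * (2 ^ n)%:R.

Fixpoint w (h : nat) : nat := if h is h'.+1 then 2 ^ (w h') else 1.

Definition W (R : archiRealFieldType) (t : R) : nat :=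
  match Num.ceil t with Posz k => w k | Negz _ => w 0 end.

Definition log2 (R : realType) (x : R) : R := ln x / ln 2.

(* Main.v *)
Require Import Defs.
From HB Require Import structures.
From mathcomp Require Import all_boot all_order all_algebra.
From mathcomp Require Import all_classical all_reals all_analysis.
From mathcomp.real_closed Require Import complex.
From mathcomp Require Import zify ring lra.
Set Implicit Arguments. Unset Strict Implicit. Unset Printing Implicit Defensive.
Import Order.TTheory GRing.Theory Num.Theory.
Local Open Scope ring_scope.

Notation V2 d := 'rV['F_2]_d.

Lemma F2_cases (a : 'F_2) : (a = 0 \/ a = 1)%R.
Proof.
case: a => [[|[|m]]] Hm; [left|right|by []]; by apply/val_inj.
Qed.

Lemma F2_add_self (a : 'F_2) : (a + a = 0)%R.
Proof. by case: (F2_cases a) => ->; apply/val_inj. Qed.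

Lemma card_F2 : #|'F_2| = 2%N.
Proof. by rewrite card_Fp. Qed.

Lemma card_rV2 d : #|'rV['F_2]_d| = (2 ^ d)%N.
Proof. by rewrite card_mx card_F2 mul1n. Qed.

Lemma fibers_equal (T K : finType) (key : T -> K) :
  (forall k1 k2, exists g : T -> T, injective g /\ forall x, key x = k1 -> key (g x) = k2) ->
  forall k, (#|K| * #|[set x | key x == k]| = #|T|)%N.
Proof.
move=> Htr k.
have Heq : forall k1 k2, (#|[set x | key x == k1]| <= #|[set x | key x == k2]|)%N.
  move=> k1 k2; have [g [ginj gk]] := Htr k1 k2.
  rewrite -(card_imset _ ginj); apply: subset_leq_card.
  apply/fintype.subsetP => y /imsetP [x]; rewrite inE => /eqP /gk Hx ->.
  by rewrite inE Hx.
have -> : #|T| = (\sum_(k' : K) #|[set x | key x == k']|)%N.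
  rewrite -sum1_card (partition_big key predT) //=.
  by apply: eq_bigr => k' _; rewrite -sum1_card; apply: eq_bigl => x; rewrite inE.
rewrite -sum_nat_const; apply: eq_bigr => k' _.
by apply/eqP; rewrite eqn_leq !Heq.
Qed.

Definition dot d (y a : 'rV['F_2]_d) : 'F_2 := (\sum_(k < d) y 0 k * a 0 k)%R.

Lemma dotDr d (y a b : 'rV['F_2]_d) : (dot y (a + b) = dot y a + dot y b)%R.
Proof. by rewrite /dot -big_split; apply: eq_bigr => k _; rewrite mxE mulrDr. Qed.

Lemma dotDl d (y a b : 'rV['F_2]_d) : (dot (a + b) y = dot a y + dot b y)%R.
Proof. by rewrite /dot -big_split; apply: eq_bigr => k _; rewrite mxE mulrDl. Qed.

Lemma card_small_sets (C : finType) k :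
  #|[set S : {set C} | (#|S| <= k)%N]| = (\sum_(j < k.+1) 'C(#|C|, j))%N.
Proof.
elim: k => [|k IH].
  rewrite big_ord1 -(card_draws C 0); apply: eq_card => S; rewrite !inE leqn0 //.
rewrite big_ord_recr /= -IH -card_draws -cardsUI.
have -> : ([set S : {set C} | (#|S| <= k)%N] :&: [set A : {set C} | #|A| == k.+1] = finset.set0).
  by apply/setP => S; rewrite !inE; case: eqP => [->|_]; rewrite ?andbF ?ltnn.
rewrite cards0 addn0.
by apply: eq_card => S; rewrite !inE leq_eqVlt ltnS orbC.
Qed.

Lemma code_exists (C : finType) (d k : nat) :
  (2 ^ d * \sum_(j < k.+1) 'C(#|C|, j) <= 2 ^ #|C|)%N ->
  exists A : {ffun C -> 'rV['F_2]_d},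
    forall y, (y != 0)%R -> (k < #|[set c | dot y (A c) == 1%R]|)%N.
Proof.
move=> Hcnt.
pose T := ({ffun C -> 'rV['F_2]_d} : finType).
case: (boolP [exists A : T, [forall y : 'rV['F_2]_d, (y != 0) ==> (k < #|[set c | dot y (A c) == 1%R]|)%N]]).
  move=> /existsP [A /forallP HA]; exists A => y Hy.
  by have := HA y; rewrite Hy.
rewrite negb_exists => /forallP Hbad.
exfalso.
set V := (\sum_(j < k.+1) 'C(#|C|, j))%N.
have Hfib : forall y : 'rV['F_2]_d, y != 0 -> forall S : {set C},
    (2 ^ #|C| * #|[set A : T | [set c | dot y (A c) == 1%R] == S]| = #|T|)%N.
  move=> y Hy S.
  have -> : (2 ^ #|C| = #|{set C}|)%N by rewrite -cardsT -card_powerset powersetT cardsT.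
  suff Htr : forall S1 S2 : {set C}, exists g : T -> T, injective g /\
     forall x : T, [set c | dot y (x c) == 1%R] = S1 -> [set c | dot y (g x c) == 1%R] = S2.
    exact: (@fibers_equal T _ (fun A : T => [set c | dot y (A c) == 1%R]) Htr S).
  move=> S1 S2.
  have [e He] : exists e : 'rV['F_2]_d, dot y e = 1.
    have [j Hj] : exists j, y 0 j != 0.
      apply/existsP; move: Hy; apply: contraR; rewrite negb_exists => /forallP H0.
      by apply/eqP/matrixP => i j; rewrite ord1 mxE; apply/eqP; have := H0 j; rewrite negbK.
    exists (delta_mx 0 j); rewrite /dot (bigD1 j) //= big1 ?addr0.
      rewrite mxE !eqxx mulr1; case: (F2_cases (y 0 j)) Hj => -> //; by rewrite eqxx.
    by move=> i Hi; rewrite mxE (negbTE Hi) andbF mulr0.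
  exists (fun A : T => [ffun c => A c + (if (c \in S1) != (c \in S2) then e else 0)]).
  split.
    move=> A1 A2 /ffunP H12; apply/ffunP => c; have := H12 c; rewrite !ffunE.
    by move/addIr.
  move=> A HA; apply/setP => c; rewrite inE ffunE dotDr.
  have Hd0 : dot y 0 = 0 by rewrite /dot big1 // => i _; rewrite mxE mulr0.
  have -> : (c \in S1) = (dot y (A c) == 1) by rewrite -HA inE.
  case: (F2_cases (dot y (A c))) => ->; case: (c \in S2);
    rewrite /= ?He ?Hd0 ?add0r ?addr0 ?F2_add_self //.
have HTpos : (0 < #|T|)%N by apply/card_gt0P; exists [ffun=> 0].
have Hbady : forall y : 'rV['F_2]_d, y != 0 ->
    (2 ^ #|C| * #|[set A : T | (#|[set c | dot y (A c) == 1%R]| <= k)%N]| <= V * #|T|)%N.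
  move=> y Hy.
  rewrite /V -card_small_sets.
  have -> : #|[set A : T | (#|[set c | dot y (A c) == 1%R]| <= k)%N]| =
     (\sum_(S : {set C} | (#|S| <= k)%N) #|[set A : T | [set c | dot y (A c) == 1%R] == S]|)%N.
    rewrite -sum1_card (partition_big (fun A : T => [set c | dot y (A c) == 1%R])
                         (fun S : {set C} => (#|S| <= k)%N)) /=.
      apply: eq_bigr => S HS; rewrite -sum1_card; apply: eq_bigl => A.
      by rewrite !inE; case: eqP => [->|]; rewrite ?HS ?andbF.
    by move=> A; rewrite inE.
  rewrite big_distrr /= (eq_bigr (fun _ => #|T|)); last by move=> S _; rewrite Hfib.
  rewrite sum_nat_const; apply: eq_leq; congr (_ * _)%N.
  by apply: eq_card => S; rewrite inE.
have Hunion : (#|T| <= \sum_(y : 'rV['F_2]_d | y != 0%R)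
                  #|[set A : T | (#|[set c | dot y (A c) == 1%R]| <= k)%N]|)%N.
  apply: (@leq_trans (\sum_(A : T) \sum_(y : 'rV['F_2]_d | y != 0%R)
       (A \in [set A : T | (#|[set c | dot y (A c) == 1%R]| <= k)%N] : nat))%N).
    rewrite -sum1_card; apply: leq_sum => A _.
    have := Hbad A; rewrite negb_forall => /existsP [y]; rewrite negb_imply -leqNgt => /andP [Hy Hk].
    by rewrite (bigD1 y) //= inE Hk; exact: leq_addr.
  rewrite exchange_big /=; apply: leq_sum => y _; rewrite -sum1_card big_mkcond /=.
  by apply: eq_leq; rewrite [RHS]big_mkcond; apply: eq_bigr => A _; case: (A \in _).
have : (2 ^ #|C| * #|T| <= \sum_(y : 'rV['F_2]_d | y != 0%R) (V * #|T|))%N.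
  apply: (leq_trans (leq_mul (leqnn _) Hunion)); rewrite big_distrr /=.
  apply: leq_sum => y Hy; apply: Hbady; exact: Hy.
rewrite sum_nat_const.
have Hc : #|predC1 (0 : V2 d)| = (2 ^ d)%N.-1 by rewrite cardC1 card_rV2.
rewrite (eq_card (B := predC1 (0 : V2 d))) // Hc.
rewrite mulnA leq_pmul2r // => H.
have HV : (0 < V)%N by rewrite /V big_ord_recl bin0.
have : (2 ^ d * V <= (2 ^ d).-1 * V)%N by apply: leq_trans Hcnt H.
rewrite leq_pmul2r // => H2.
have : (0 < 2 ^ d)%N by rewrite expn_gt0.
by case: (2 ^ d)%N H2 => // m; rewrite /= ltnn.
Qed.

Local Close Scope ring_scope.

Definition dd (M : nat) : nat := if (M < 1024)%N then M else (M %/ 8)%N.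
Definition kk (M : nat) : nat := (M %/ 1024)%N.
Definition Vb (M k : nat) : nat := (\sum_(j < k.+1) 'C(M, j))%N.

Lemma Vb_bound M k : (k <= M)%N -> (Vb M k * 4 ^ (M - k) <= 5 ^ M)%N.
Proof.
move=> hk.
have -> : (5 ^ M = \sum_(i < M.+1) 'C(M, i) * 4 ^ (M - i))%N.
  rewrite -[5]/(4+1)%N expnDn; apply: eq_bigr => i _; by rewrite exp1n muln1 mulnC.
rewrite /Vb big_distrl /=.
rewrite (big_ord_widen M.+1 (fun j => 'C(M, j) * 4 ^ (M - k))%N) ?ltnS //.
rewrite [X in (_ <= X)%N]big_mkcond [X in (X <= _)%N]big_mkcond /=; apply: leq_sum => i _.
case: ifP => // Hi; rewrite leq_mul2l; apply/orP; right.
by apply: leq_pexp2l => //; apply: leq_sub2l; rewrite -ltnS.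
Qed.

Lemma code_ok u : (2 ^ dd (2 ^ u) * Vb (2 ^ u) (kk (2 ^ u)) <= 2 ^ (2 ^ u))%N.
Proof.
case: (ltnP u 10) => hu.
  have hM : (2 ^ u < 1024)%N by rewrite -[1024]/(2 ^ 10) ltn_exp2l.
  by rewrite /dd hM /kk divn_small // /Vb big_ord1 bin0 muln1.
set t := (2 ^ (u - 10))%N.
have hM : (2 ^ u = 1024 * t)%N by rewrite /t -[1024]/(2 ^ 10) -expnD subnKC.
have ht : (0 < t)%N by rewrite expn_gt0.
rewrite /dd /kk hM.
have -> : (1024 * t < 1024)%N = false.
  by apply/negbTE; rewrite -leqNgt -{1}[1024]muln1 leq_mul2l ht orbT.
have -> : (1024 * t %/ 8 = 128 * t)%N by rewrite -[1024]/(128 * 8) mulnAC mulnK.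
have -> : (1024 * t %/ 1024 = t)%N by rewrite mulKn.
have B := Vb_bound (leq_pmull t (isT : 0 < 1024)%N).
have E : (1024 * t - t = 1023 * t)%N by rewrite -{2}[t]mul1n -mulnBl.
rewrite E in B.
rewrite -(@leq_pmul2r (4 ^ (1023 * t))) ?expn_gt0 //.
apply: (@leq_trans (2 ^ (128 * t) * 5 ^ (1024 * t))).
  by rewrite -mulnA leq_mul2l B orbT.
have H5 : (5 ^ (1024 * t) <= 2 ^ (2560 * t))%N.
  have E1 : (1024 * t = 2 * (512 * t))%N by rewrite mulnA.
  have E2 : (2560 * t = 5 * (512 * t))%N by rewrite mulnA.
  rewrite E1 E2 (expnM 5 2) (expnM 2 5) leq_exp2r // muln_gt0 ht.
  done.
apply: (@leq_trans (2 ^ (128 * t) * 2 ^ (2560 * t))); first by rewrite leq_mul2l H5 orbT.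
have E4 : (4 ^ (1023 * t) = 2 ^ (2 * (1023 * t)))%N by rewrite (expnM 2 2).
rewrite E4 -!expnD leq_exp2l //.
lia.
Qed.

Fixpoint uu (i : nat) : nat := if i is i'.+1 then (uu i' + dd (2 ^ uu i'))%N else 0%N.

Lemma uuS i : uu i.+1 = (uu i + dd (2 ^ uu i))%N.
Proof. by []. Qed.
Arguments uu : simpl never.

Lemma uu_mono i j : (i <= j)%N -> (uu i <= uu j)%N.
Proof.
move=> /subnKC <-; elim: (j - i)%N => [|m IH]; first by rewrite addn0.
by rewrite addnS uuS; apply: leq_trans IH (leq_addr _ _).
Qed.

Lemma uu_tower j : (w j + 3 <= uu j.+3)%N.
Proof.
elim: j => [|j IH]; first by [].
have h11 : (11 <= uu j.+3)%N by apply: (@leq_trans (uu 3)) => //; apply: uu_mono.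
rewrite (uuS j.+3) /dd.
have -> : (2 ^ uu j.+3 < 1024)%N = false.
  by apply/negbTE; rewrite -leqNgt -[1024]/(2 ^ 10) leq_exp2l //; apply: leq_trans h11.
have -> : (2 ^ uu j.+3 %/ 8 = 2 ^ (uu j.+3 - 3))%N.
  by rewrite -[8]/(2 ^ 3) -expnB // ; apply: leq_trans h11.
rewrite (_ : w j.+1 = 2 ^ w j)%N // [X in (_ <= X)%N]addnC leq_add //; last by lia.
rewrite leq_exp2l //; lia.
Qed.

Local Open Scope ring_scope.

Definition coord n (x : 'rV['F_2]_n) (t : nat) : 'F_2 :=
  match (insub t : option 'I_n) with Some i => x 0 i | None => 0 end.

Lemma coordD n (x y : 'rV['F_2]_n) t : coord (x + y) t = coord x t + coord y t.
Proof. by rewrite /coord; case: insub => [i|]; rewrite ?mxE ?addr0. Qed.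

Lemma coord_ord n (x : 'rV['F_2]_n) (i : 'I_n) : coord x i = x 0 i.
Proof. by rewrite /coord valK. Qed.

Lemma coord_ge n (x : 'rV['F_2]_n) t : (n <= t)%N -> coord x t = 0.
Proof. by move=> Ht; rewrite /coord insubF // ltnNge Ht. Qed.

Definition cellv n u (x : 'rV['F_2]_n) : 'rV['F_2]_u := \row_(j < u) coord x j.
Definition extv n u (v : 'rV['F_2]_u) : 'rV['F_2]_n := \row_(j < n) coord v j.

Lemma cellvD n u (x y : 'rV['F_2]_n) : cellv u (x + y) = cellv u x + cellv u y.
Proof. by apply/rowP => j; rewrite !mxE coordD. Qed.

Lemma cellv_ext n u (v : 'rV['F_2]_u) : (u <= n)%N -> cellv u (extv n v) = v.
Proof.
move=> Hun; apply/rowP => j; rewrite mxE.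
have Hj : (j < n)%N by apply: leq_trans (ltn_ord j) Hun.
by rewrite -[nat_of_ord j]/(nat_of_ord (Ordinal Hj)) coord_ord mxE /= coord_ord.
Qed.

Lemma fiber_card n u (c : 'rV['F_2]_u) : (u <= n)%N ->
  (2 ^ u * #|[set x : 'rV['F_2]_n | cellv u x == c]| = 2 ^ n)%N.
Proof.
move=> Hun; rewrite -!card_rV2.
suff Htr : forall k1 k2 : 'rV['F_2]_u, exists g : 'rV['F_2]_n -> 'rV['F_2]_n, injective g /\
    forall x, cellv u x = k1 -> cellv u (g x) = k2.
  exact: (@fibers_equal _ _ (fun x : 'rV['F_2]_n => cellv u x) Htr c).
move=> k1 k2; exists (fun x => x + extv n (k2 - k1)); split; first exact: addIr.
by move=> x Hx; rewrite cellvD cellv_ext // Hx addrC subrK.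
Qed.

Lemma code_exists_u i : exists A : {ffun 'rV['F_2]_(uu i) -> 'rV['F_2]_(dd (2 ^ uu i))},
  [forall y, (y != 0) ==> (kk (2 ^ uu i) < #|[set c | dot y (A c) == 1%R]|)%N].
Proof.
have [A HA] : exists A : {ffun 'rV['F_2]_(uu i) -> 'rV['F_2]_(dd (2 ^ uu i))},
  forall y, y != 0 -> (kk (2 ^ uu i) < #|[set c | dot y (A c) == 1%R]|)%N.
  apply: code_exists; rewrite card_rV2; exact: code_ok.
by exists A; apply/forallP => y; apply/implyP; apply: HA.
Qed.

Definition codeA i := xchoose (code_exists_u i).

Lemma codeA_spec i y : y != 0 ->
  (kk (2 ^ uu i) < #|[set c | dot y (codeA i c) == 1%R]|)%N.
Proof. by have /forallP/(_ y)/implyP := xchooseP (code_exists_u i); apply. Qed.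

Definition zv n i (x : 'rV['F_2]_n) : 'rV['F_2]_(dd (2 ^ uu i)) :=
  \row_(k < dd (2 ^ uu i)) coord x (uu i + k).
Definition beta n i (x : 'rV['F_2]_n) : 'F_2 := dot (zv i x) (codeA i (cellv (uu i) x)).
Definition lev (R : realType) n i (x : 'rV['F_2]_n) : R := if beta i x == 1 then 1 else 0.
Definition fF (R : realType) S n (x : 'rV['F_2]_n) : R :=
  \sum_(i < S) (4^-1)^+(i.+1) * lev R i x.

Lemma zvD n i (x y : 'rV['F_2]_n) : zv i (x + y) = zv i x + zv i y.
Proof. by apply/rowP => k; rewrite !mxE coordD. Qed.

Lemma lev_local (R : realType) n j (x y : 'rV['F_2]_n) :
  (forall t, (t < uu j.+1)%N -> coord x t = coord y t) -> lev R j x = lev R j y.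
Proof.
move=> Hxy; rewrite /lev /beta.
have -> : cellv (uu j) x = cellv (uu j) y.
  apply/rowP => k; rewrite !mxE; apply: Hxy; apply: leq_trans (ltn_ord k) _.
  by rewrite uuS leq_addr.
have -> : zv j x = zv j y.
  by apply/rowP => k; rewrite !mxE; apply: Hxy; rewrite uuS ltn_add2l.
by [].
Qed.

Lemma lev01 (R : realType) n j (x : 'rV['F_2]_n) : 0 <= lev R j x <= 1.
Proof. by rewrite /lev; case: ifP; rewrite ?lexx ?ler01. Qed.

Lemma geom_tail (R : realType) i S : (i < S)%N ->
  3 * (\sum_(j < S | (i < j)%N) (4^-1 : R)^+(j.+1)) + (4^-1)^+S <= (4^-1)^+(i.+1).
Proof.
elim: S => [//|S IH] HiS.
rewrite big_mkcond big_ord_recr /= -big_mkcond /=.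
case: (ltnP i S) => HiS'.
  rewrite mulrDr -addrA.
  have -> : 3 * (4^-1 : R) ^+ S.+1 + (4^-1) ^+ S.+1 = (4^-1)^+S.
    by rewrite exprS; lra.
  exact: IH.
have HS : S = i by apply/eqP; rewrite eqn_leq HiS'; rewrite ltnS in HiS.
rewrite ?addr0 big1 ?mulr0 ?add0r; first by rewrite HS.
move=> j Hj; have Hj2 := ltn_ord j; exfalso; lia.
Qed.

Lemma geom_all (R : realType) S :
  3 * (\sum_(j < S) (4^-1 : R)^+(j.+1)) + (4^-1)^+S <= 1.
Proof.
elim: S => [|S IH]; first by rewrite big_ord0 mulr0 add0r expr0.
rewrite big_ord_recr /= mulrDr -addrA.
have -> : 3 * (4^-1 : R) ^+ S.+1 + (4^-1) ^+ S.+1 = (4^-1)^+S.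
  by rewrite exprS; lra.
exact: IH.
Qed.

Lemma fF01 (R : realType) S n (x : 'rV['F_2]_n) : 0 <= fF R S x <= 1.
Proof.
apply/andP; split.
  by apply: sumr_ge0 => i _; apply: mulr_ge0; [apply: exprn_ge0; rewrite invr_ge0 | case/andP: (lev01 R i x)].
apply: (@le_trans _ _ (\sum_(i < S) (4^-1 : R)^+(i.+1))).
  apply: ler_sum => i _; rewrite -[X in _ <= X]mulr1; apply: ler_wpM2l.
    by apply: exprn_ge0; rewrite invr_ge0.
  by case/andP: (lev01 R i x).
have := geom_all R S.
have H0 : 0 <= (4^-1 : R)^+S by apply: exprn_ge0; rewrite invr_ge0.
have H1 : 0 <= \sum_(j < S) (4^-1 : R)^+(j.+1) by apply: sumr_ge0 => j _; apply: exprn_ge0; rewrite invr_ge0.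
lra.
Qed.

Local Open Scope complex_scope.
Lemma F2_10 : (1 == 0 :> 'F_2) = false. Proof. exact: oner_eq0. Qed.

Lemma bad_value (R : realType) S n (eps : R) (H : {set 'rV['F_2]_n}) i (g : 'rV['F_2]_n) :
  is_subgroup H -> (i < S)%N ->
  (forall h, h \in H -> forall t, (t < uu i)%N -> coord h t = 0) ->
  (exists2 h0, h0 \in H & dot (zv i h0) (codeA i (cellv (uu i) g)) = 1) ->
  eps * 6 < (4^-1)^+(i.+1) ->
  ~ regular_value (fF R S (n:=n)) H eps g.
Proof.
move=> [H0 [HD HN]] HiS HU [h0 h0H Hh0] Heps Hreg.
set a := codeA i (cellv (uu i) g) in Hh0.
pose lam := fun h : 'rV['F_2]_n => dot (zv i h) a.
have lamD : forall x y, lam (x + y) = lam x + lam y by move=> x y; rewrite /lam zvD dotDl.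
pose chr := fun h : 'rV['F_2]_n => (if lam h == 0 then 1 else -1 : R).
have chrM : forall x y, chr (x + y) = chr x * chr y.
  move=> x y; rewrite /chr lamD.
  by case: (F2_cases (lam x)) => ->; case: (F2_cases (lam y)) => ->;
    rewrite ?addr0 ?add0r ?F2_add_self ?eqxx ?F2_10 ?mul1r ?mulr1 ?mulrNN ?mulr1.
have Hchar : is_character H (fun x => (chr x)%:C).
  split.
    move=> x _; apply/eqP => -[] /eqP; rewrite /chr; case: ifP => _.
      by rewrite oner_eq0.
    by rewrite oppr_eq0 oner_eq0.
  by move=> x y _ _; rewrite chrM rmorphM.
have Hnt : nontrivial_on H (fun x => (chr x)%:C).
  exists h0 => //; apply/eqP => -[]; rewrite /chr /lam Hh0 F2_10 => Habs.
  lra.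
have := Hreg _ Hchar Hnt.
pose Sr := \sum_(x in H) fF R S (x + g) * chr x.
have -> : \sum_(x in H) ((fF R S (x + g))%:C * (chr x)%:C)%C = Sr%:C.
  by rewrite rmorph_sum; apply: eq_bigr => x _; rewrite rmorphM.
move=> HSr.
have HSr' : `|Sr| <= eps * #|H|%:R.
  rewrite -lecR; apply: le_trans HSr; exact: (normc_ge_Re (Sr%:C)).
have lh0 : lam h0 = 1 := Hh0.
pose P := [set x in H | lam x == 0].
pose Q := [set x in H | lam x == 1].
have lam0 : lam 0 = 0 by rewrite /lam /dot big1 // => k _; rewrite mxE /coord; case: insub => [?|]; rewrite ?mxE mul0r.
have HPQ : #|P| = #|Q|.
  apply/eqP; rewrite eqn_leq; apply/andP; split.
    rewrite -(card_imset _ (addIr h0)); apply: subset_leq_card.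
    apply/fintype.subsetP => y /imsetP [x]; rewrite inE => /andP [xH /eqP lx] ->.
    by rewrite inE HD // lamD lx lh0 add0r eqxx.
  rewrite -(card_imset _ (addIr h0)); apply: subset_leq_card.
  apply/fintype.subsetP => y /imsetP [x]; rewrite inE => /andP [xH /eqP lx] ->.
  by rewrite inE HD // lamD lx lh0 F2_add_self eqxx.
have HPQH : (#|P| + #|Q| = #|H|)%N.
  rewrite -(cardsID [set x | lam x == 0] H); congr (_ + _)%N; apply: eq_card => x;
    rewrite !inE; case: (F2_cases (lam x)) => ->; rewrite ?eqxx ?F2_10 ?andbT ?andbF //.
pose N := (#|H|%:R : R).
pose M := (#|P|%:R : R).
have HNM : N = 2 * M by rewrite /N /M -HPQH -HPQ natrD; ring.
have HM1 : 1 <= M.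
  by rewrite /M ler1n card_gt0; apply/set0Pn; exists 0; rewrite inE H0 lam0 eqxx.
have sum_cond : forall (c0 c1 : R), \sum_(x in H) (if lam x == 0 then c0 else c1) = c0 * M + c1 * M.
  move=> c0 c1; rewrite (bigID (fun x => lam x == 0)) /=.
  rewrite (eq_bigr (fun _ => c0)); last by move=> x /andP [_ ->].
  rewrite [X in _ + X](eq_bigr (fun _ => c1)); last by move=> x /andP [_ /negbTE ->].
  rewrite (eq_bigl (fun x => x \in P)); last by move=> x; rewrite inE.
  rewrite [X in _ + X](eq_bigl (fun x => x \in Q)); last first.
    by move=> x; rewrite inE; case: (F2_cases (lam x)) => ->; rewrite ?eqxx ?F2_10.
  by rewrite !sumr_const -HPQ /M !mulr_natr.
pose T := fun j : nat => \sum_(x in H) lev R j (x + g) * chr x.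
have HSrT : Sr = \sum_(j < S) (4^-1)^+(j.+1) * T j.
  rewrite /Sr /fF; under eq_bigr do rewrite big_distrl.
  rewrite exchange_big; apply: eq_bigr => j _; rewrite big_distrr; apply: eq_bigr => x _.
  by rewrite /= mulrA.
have Tlt : forall j, (j < i)%N -> T j = 0.
  move=> j Hj; rewrite /T.
  have -> : \sum_(x in H) lev R j (x + g) * chr x = \sum_(x in H) (if lam x == 0 then lev R j g else - lev R j g).
    apply: eq_bigr => x xH; rewrite (@lev_local R n j (x + g) g).
      by rewrite /chr; case: ifP => _; rewrite ?mulr1 ?mulrN1.
    move=> t Ht; rewrite coordD HU ?add0r //; apply: leq_trans Ht _; exact: uu_mono.
  by rewrite sum_cond; ring.
have Ti : `|T i| = M.
  have Hb : forall x, x \in H -> beta i (x + g) = lam x + beta i g.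
    move=> x xH; rewrite /beta.
    have -> : cellv (uu i) (x + g) = cellv (uu i) g.
      by apply/rowP => k; rewrite !mxE coordD HU ?add0r.
    by rewrite zvD dotDl.
  rewrite /T.
  have -> : \sum_(x in H) lev R i (x + g) * chr x =
     \sum_(x in H) (if lam x == 0 then (if beta i g == 1 then 1 else 0) else
                                    (if beta i g == 0 then -1 else 0)).
    apply: eq_bigr => x xH; rewrite /lev Hb // /chr.
    case: (F2_cases (lam x)) => ->; case: (F2_cases (beta i g)) => ->;
      rewrite ?eqxx ?F2_10 ?add0r ?addr0 ?F2_add_self ?eqxx ?F2_10 /=; try ring.
  rewrite sum_cond; case: (F2_cases (beta i g)) => ->; rewrite ?eqxx ?F2_10.
    have -> : 0 * M + -1 * M = - M by ring.
    by rewrite normrN ger0_norm //; apply: le_trans HM1.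
  have -> : 1 * M + 0 * M = M by ring.
  by rewrite ger0_norm //; apply: le_trans HM1.
have Tle : forall j, `|T j| <= N.
  move=> j; rewrite /T /N; apply: le_trans (ler_norm_sum _ _ _) _.
  rewrite -sumr_const; apply: ler_sum => x _; rewrite normrM.
  have -> : `|chr x| = 1 by rewrite /chr; case: ifP => _; rewrite ?normrN normr1.
  by rewrite mulr1 /lev; case: ifP => _; rewrite ?normr1 ?normr0 ?ler01.
rewrite (bigD1 (Ordinal HiS)) //= in HSrT.
set Rest := \sum_(j < S | j != Ordinal HiS) _ in HSrT.
set Gs := \sum_(j < S | (i < j)%N) (4^-1 : R) ^+ j.+1.
have HGs0 : 0 <= Gs by apply: sumr_ge0 => j _; apply: exprn_ge0; rewrite invr_ge0.
have Hq0 : forall m, 0 <= (4^-1 : R) ^+ m by move=> m; apply: exprn_ge0; rewrite invr_ge0.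
have HRest : `|Rest| <= Gs * N.
  apply: le_trans (ler_norm_sum _ _ _) _.
  rewrite /Gs mulr_suml big_mkcond [X in _ <= X]big_mkcond; apply: ler_sum => j _.
  case: ifP => Hj1; case: ifP => Hj2.
  - rewrite normrM ger0_norm //; apply: ler_wpM2l => //; exact: Tle.
  - have Hji : (j < i)%N.
      rewrite ltn_neqAle; move: Hj1 Hj2; rewrite -val_eqE /= => -> /negbT; by rewrite -leqNgt.
    by rewrite Tlt // mulr0 normr0.
  - by apply: mulr_ge0 => //; rewrite /N ler0n.
  - by [].
have G := geom_tail R HiS.
have HTi : `|(4^-1 : R) ^+ i.+1 * T i| = (4^-1)^+i.+1 * M by rewrite normrM ger0_norm // Ti.
have Htri : `|(4^-1 : R) ^+ i.+1 * T i| <= `|Sr| + `|Rest|.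
  have -> : (4^-1 : R) ^+ i.+1 * T i = Sr - Rest by rewrite HSrT addrK.
  exact: ler_normB.
have Hq1 := Hq0 S.
have Hw := Hq0 i.+1.
rewrite HTi in Htri.
have HSr2 : `|Sr| <= eps * (2 * M) by rewrite -HNM.
rewrite HNM in HRest.
have Hlin : (4^-1 : R) ^+ i.+1 * M <= (2 * (eps + Gs)) * M.
  apply: le_trans Htri _; apply: le_trans (lerD HSr2 HRest) _.
  by rewrite le_eqVlt; apply/orP; left; apply/eqP; ring.
rewrite ler_pM2r in Hlin; last by apply: lt_le_trans HM1; exact: ltr01.
have G' : 3 * Gs + (4^-1 : R) ^+ S <= (4^-1)^+i.+1 := G.
clear G; lra.
Qed.

Local Close Scope complex_scope.
Lemma ceil1024 M : (M < 1024 * (M %/ 1024).+1)%N.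
Proof. lia. Qed.

Lemma regular_in_U (R : realType) S n (eps : R) (H : {set 'rV['F_2]_n}) :
  is_subgroup H -> regular_subgroup (fF R S (n:=n)) H eps -> (uu S <= n)%N ->
  0 < eps -> eps * 1024 <= 1 -> (forall i, (i < S)%N -> eps * 6 < (4^-1)^+(i.+1)) ->
  forall i, (i <= S)%N -> forall h, h \in H -> forall t, (t < uu i)%N -> coord h t = 0.
Proof.
move=> Hsub Hreg HSn Heps0 Heps1024 Hmarg.
elim => [|i IH] HiS h hH t Ht; first by [].
have HiS' : (i < S)%N by [].
have IHi := IH (ltnW HiS').
set u := uu i.
have Hun : (u <= n)%N by apply: leq_trans HSn; apply: uu_mono; apply: ltnW.
pose B := [set c : 'rV['F_2]_u | [exists h in H, dot (zv i h) (codeA i c) == 1]].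
pose Bad := [set g : 'rV['F_2]_n | ~~ `[< regular_value (fF R S (n:=n)) H eps g >]].
have HsubB : [set g : 'rV['F_2]_n | cellv u g \in B] \subset Bad.
  apply/fintype.subsetP => g; rewrite !inE => /existsP [h0 /andP [h0H /eqP Hh0]].
  apply/asboolPn; apply: (bad_value Hsub HiS' IHi) => //; first by exists h0.
  by apply: Hmarg.
have Hcard : (2 ^ u * #|[set g : 'rV['F_2]_n | cellv u g \in B]| = #|B| * 2 ^ n)%N.
  rewrite -sum1_card (partition_big (fun g => cellv u g) (mem B)) /=; last by move=> g; rewrite inE; apply.
  rewrite big_distrr /= -sum_nat_const; apply: eq_bigr => c Hc.
  rewrite -(fiber_card c Hun); congr (_ * _)%N; rewrite -sum1_card; apply: eq_bigl => g.
  rewrite !inE; case: (cellv u g =P c) => [->|_]; last by rewrite andbF.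
  by rewrite andbT; move: Hc; rewrite inE.
have HB : (#|B| <= kk (2 ^ u))%N.
  have HregB := Hreg; rewrite /regular_subgroup -/Bad in HregB.
  have H1 : (#|B| * 2 ^ n)%:R <= eps * (2 ^ u)%:R * (2 ^ n)%:R :> R.
    rewrite -Hcard natrM -mulrA [X in _ <= _ * X]mulrC mulrA [X in _ <= X]mulrC.
    apply: ler_wpM2l; first by rewrite ler0n.
    apply: le_trans HregB; rewrite ler_nat; exact: subset_leq_card.
  rewrite natrM ler_pM2r ?ltr0n ?expn_gt0 // in H1.
  rewrite -ltnS -(ltr_nat R); apply: le_lt_trans H1 _.
  have := ceil1024 (2 ^ u); rewrite -(ltr_nat R) natrM => Hc.
  rewrite -(ltr_pM2l Heps0) in Hc.
  have HK : 0 <= ((2 ^ u %/ 1024).+1)%:R :> R by rewrite ler0n.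
  rewrite /kk; nra.
have Hzv : zv i h = 0.
  apply/eqP; apply: contraT => Hnz.
  have Hsp := codeA_spec Hnz; move: Hsp; rewrite ltnNge => /negP Hsp; exfalso; apply: Hsp; apply: leq_trans _ HB.
  apply: subset_leq_card; apply/fintype.subsetP => c; rewrite !inE => Hc.
  by apply/existsP; exists h; rewrite hH.
case: (ltnP t u) => Htu; first exact: IHi.
move: Ht; rewrite uuS -/u => Ht.
have Hk : (t - u < dd (2 ^ u))%N by lia.
have := congr1 (fun v : 'rV['F_2]_(dd (2 ^ uu i)) => v 0 (Ordinal Hk)) Hzv; rewrite !mxE /= subnKC //.
Qed.

Lemma triv_index n (H : {set Gn n}) : is_subgroup H -> (1 <= #|[set: Gn n]| %/ #|H|)%N.
Proof.
move=> [H0 _]; rewrite divn_gt0; first by rewrite cardsT max_card.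
by apply/card_gt0P; exists 0.
Qed.

Lemma marg (R : realType) (eps : R) s i : 0 < eps -> eps * 2 ^+ (2 * s + 10) < 1 ->
  (i < s.+3)%N -> eps * 6 < (4^-1) ^+ i.+1.
Proof.
move=> He0 He Hi.
rewrite exprVn -[X in _ < X]mul1r ltr_pdivlMr ?exprn_gt0 //.
have HX : (4 : R) ^+ i.+1 <= 2 ^+ (2 * s + 6).
  have -> : (2 : R) ^+ (2 * s + 6) = 4 ^+ s.+3.
    by rewrite (_ : (2 * s + 6 = 2 * s.+3)%N); [rewrite exprM; congr (_ ^+ _); rewrite expr2; lra | lia].
  by apply: ler_weXn2l; [lra | exact: Hi].
have E10 : (2 : R) ^+ (2 * s + 10) = 2 ^+ (2 * s + 6) * 16.
  by rewrite (_ : (2 * s + 10 = (2 * s + 6) + 4)%N) ?exprD; [congr (_ * _); rewrite !exprS expr0; lra | lia].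
rewrite E10 in He.
have HA : 0 <= (4 : R) ^+ i.+1 by apply: exprn_ge0; lra.
have H1 : eps * ((4 : R) ^+ i.+1) <= eps * 2 ^+ (2 * s + 6) by apply: ler_wpM2l; [lra|].
have H2 : 0 <= eps * 2 ^+ (2 * s + 6) by apply: mulr_ge0; [lra | apply: exprn_ge0; lra].
nra.
Qed.

Unset Implicit Arguments.

Theorem mainTheorem15 (R : realType) (eps : R) :
  0 < eps -> eps < 1 / 20 ->
  exists n0 : nat, forall n : nat, (n0 <= n)%N ->
    exists f : Gn n -> R,
      (forall x, 0 <= f x <= 1) /\
      forall H : {set Gn n},
        is_subgroup H -> regular_subgroup f H eps ->
        (W (2^-1 * log2 (1 / eps) - 5) <= #|[set: Gn n]| %/ #|H|)%N.
Proof.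
move=> Heps0 Heps20.
rewrite /W.
case Hc: (Num.ceil (2^-1 * log2 (1 / eps) - 5)) => [k|k]; last first.
  exists 0%N => n _; exists (fun _ => 0); split => [x|H HH _]; first by rewrite lexx ler01.
  exact: triv_index.
case: k Hc => [|s] Hc.
  exists 0%N => n _; exists (fun _ => 0); split => [x|H HH _]; first by rewrite lexx ler01.
  exact: triv_index.
have Hlt : (s%:R : R) < 2^-1 * log2 (1 / eps) - 5.
  have := ceil_itv (2^-1 * log2 (1 / eps) - 5); rewrite Hc => /andP [H1 _].
  move: H1; have -> : (Posz s.+1 - 1 = Posz s)%R by rewrite -addn1 PoszD addrK.
  by [].
have HL : 2 * (s%:R : R) + 10 < log2 (1 / eps) by lra.
have Hln2 : 0 < ln (2 : R) by apply: ln_gt0; lra.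
have Hln : ln ((2 : R) ^+ (2 * s + 10)) < ln (1 / eps).
  rewrite lnXn; last by lra.
  rewrite /log2 ltr_pdivlMr // in HL.
  rewrite -(mulr_natr (ln (2:R)) (2 * s + 10)) natrD natrM; apply: le_lt_trans HL; rewrite le_eqVlt; apply/orP; left; apply/eqP; ring.
have Hpow : (2 : R) ^+ (2 * s + 10) < 1 / eps.
  rewrite -ltr_ln // posrE; last by rewrite divr_gt0 // ltr01.
  by apply: exprn_gt0; lra.
have He : eps * 2 ^+ (2 * s + 10) < 1.
  have := Hpow; rewrite -(ltr_pM2l Heps0) mulrA mulr1 mulfV //; last by apply: lt0r_neq0.
have He1024 : eps * 1024 <= 1.
  have H1024 : (1024 : R) <= 2 ^+ (2 * s + 10).
    have -> : (1024 : R) = 2 ^+ 10 by rewrite !exprS expr0; lra.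
    by apply: ler_weXn2l; [lra | lia].
  have := ler_wpM2l (ltW Heps0) H1024; lra.
exists (uu s.+3) => n Hn; exists (fF R s.+3 (n:=n)); split; first exact: fF01.
move=> H HH Hreg.
have HU := regular_in_U HH Hreg Hn Heps0 He1024 (fun i Hi => marg Heps0 He Hi) (leqnn s.+3).
set F := [set x : 'rV['F_2]_n | cellv (uu s.+3) x == 0].
have HF := fiber_card (0 : 'rV['F_2]_(uu s.+3)) Hn.
have HHF : (#|H| <= #|F|)%N.
  apply: subset_leq_card; apply/fintype.subsetP => h hH; rewrite inE; apply/eqP/rowP => k.
  by rewrite !mxE; apply: HU.
have HH0 : (0 < #|H|)%N by case: HH => H0 _; apply/card_gt0P; exists 0.
have HF0 : (0 < #|F|)%N by apply: leq_trans HH0 HHF.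
rewrite cardsT card_rV2.
apply: leq_trans (leq_div2l _ HH0 HHF).
rewrite -HF mulnK //.
rewrite (_ : w s.+1 = 2 ^ w s)%N // leq_exp2l //.
by apply: leq_trans (uu_tower s); apply: leq_addr.
Qed.
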